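(* Let $n\ge 3$ and consider the Markov chain on $\{0,1,\dots,n-1\}$ with $n\times n$ transition probability matrix $\mathbf P=(P_{ij})$ given by: $P_{00}=5/6$, $P_{01}=1/6$; $P_{10}=5/6$, $P_{12}=1/6$; for $2\le i\le n-2$: $P_{i0}=2/3$, $P_{i,i-1}=1/6$, $P_{i,i+1}=1/6$; $P_{n-1,0}=2/3$, $P_{n-1,n-2}=1/6$, $P_{n-1,n-1}=1/6$; all other entries $0$. Then the steady state probability vector $\vec\pi=(\pi_0,\dots,\pi_{n-1})$ (the unique probability vector with $\vec\pi=\vec\pi\mathbf P$) is given by $$\pi_i=\frac{B_{n-i}-B_{n-i-1}}{B_n},\qquad i=0,1,\dots,n-1.$$
   Context: The balancing numbers $B_m$ are defined by $B_0=0$, $B_1=1$, $B_{m+1}=6B_m-B_{m-1}$. *)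

(* Defs.v *)
From mathcomp Require Import all_boot all_order all_algebra.
Set Implicit Arguments. Unset Strict Implicit. Unset Printing Implicit Defensive.
Import Order.TTheory GRing.Theory Num.Theory.
Local Open Scope ring_scope.

Fixpoint balancing (m : nat) : int :=
  match m with
  | 0 => 0
  | 1 => 1
  | (m'.+1 as k).+1 => 6 * balancing k - balancing m'
  end.

Definition Pentry (R : fieldType) (n i j : nat) : R :=
  if i == 0%N then
    (if j == 0%N then 5/6 else if j == 1%N then 1/6 else 0)
  else if i == 1%N then
    (if j == 0%N then 5/6 else if j == 2%N then 1/6 else 0)
  else if i == n.-1 then
    (if j == 0%N then 2/3 else if j == n.-2 then 1/6
     else if j == n.-1 then 1/6 else 0)
  else
    (if j == 0%N then 2/3 else if j == i.-1 then 1/6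
     else if j == i.+1 then 1/6 else 0).

Definition transP (R : fieldType) (n : nat) : 'M[R]_n :=
  \matrix_(i < n, j < n) Pentry R n i j.

Definition is_prob_vec (R : numDomainType) (n : nat) (x : 'rV[R]_n) : Prop :=
  (forall i, 0 <= x 0 i) /\ \sum_(i < n) x 0 i = 1.

(* Main.v *)
Require Import Defs.
From mathcomp Require Import all_boot all_order all_algebra.
From mathcomp Require Import zify ring lra.
Import Order.TTheory GRing.Theory Num.Theory.
Local Open Scope ring_scope.

Lemma Pentry_col (R : realFieldType) m (i j : nat) : (2 <= m)%N -> (i <= m)%N -> (1 <= j <= m)%N ->
  Pentry R m.+1 i j = ((i == j.-1)%:R + (i == j.+1)%:R + (i == j)%:R * (j == m)%:R) / 6.
Proof.
move=> hm hi /andP[hj1 hj2]; rewrite /Pentry /=.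
repeat match goal with |- context[(?a == ?b)%N] => case: (a =P b) => ? end; try lia;
 rewrite /= ?(mul0r,mulr0,add0r,addr0,mul1r,mulr1) //.
Qed.

Lemma Pentry_col0 (R : realFieldType) m (i : nat) : (2 <= m)%N -> (i <= m)%N ->
  Pentry R m.+1 i 0 = 2/3 + ((i == 0%N)%:R + (i == 1%N)%:R) / 6.
Proof.
move=> hm hi; rewrite /Pentry /=.
repeat match goal with |- context[(?a == ?b)%N] => case: (a =P b) => ? end; try lia;
 rewrite /= ?(mul0r,mulr0,add0r,addr0,mul1r,mulr1) //.
all: field; by rewrite ?(pnatr_eq0).
Qed.

Set Implicit Arguments. Unset Strict Implicit.
Section S.
Variable R : realFieldType.

Definition bR (k : nat) : R := (balancing k)%:~R.
Definition cR (k : nat) : R := bR k - bR (k - 1).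

Lemma bR_rec k : bR k.+2 = 6 * bR k.+1 - bR k.
Proof. by rewrite /bR /= rmorphB rmorphM. Qed.

Lemma bal_pos k : (0 <= balancing k)%R /\ (1 <= balancing k.+1)%R /\ (balancing k <= balancing k.+1)%R.
Proof.
elim: k => [|k [h1 [h2 h3]]]; first by [].
split; first lia. change (balancing k.+2) with (6 * balancing k.+1 - balancing k). lia.
Qed.

Lemma bR_ge0 k : 0 <= bR k.
Proof. by rewrite /bR ler0z; case: (bal_pos k). Qed.
Lemma bR_gt0 k : 0 < bR k.+1.
Proof. rewrite /bR ltr0z; case: (bal_pos k) => _ [h _]; lia. Qed.
Lemma cR_ge0 k : 0 <= cR k.
Proof.
rewrite /cR subr_ge0; case: k => [|k]; first by rewrite /= lexx.
by rewrite subn1 /= /bR ler_int; case: (bal_pos k) => _ [_ h].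
Qed.

Lemma cR_rec k : (1 <= k)%N -> cR k.+2 = 6 * cR k.+1 - cR k.
Proof.
case: k => // k _; rewrite /cR !subn1 /= bR_rec (bR_rec k); ring.
Qed.

Lemma tele n : \sum_(i < n) cR (n - i) = bR n.
Proof.
elim: n => [|n IH]; first by rewrite big_ord0.
rewrite big_ord_recl /= subn0 -[in RHS](subrK (bR n) (bR n.+1)).
congr (_ + _); first by rewrite /cR subn1.
by rewrite -IH; apply: eq_bigr => i _; rewrite /bump /= add1n subSS.
Qed.

Definition Xv m (x : 'rV[R]_m.+1) (k : nat) : R :=
  if (k <= m)%N then x 0 (inord k) else 0.

Lemma Xv_ord m (x : 'rV[R]_m.+1) (i : 'I_m.+1) : x 0 i = Xv x i.
Proof. by rewrite /Xv -ltnS ltn_ord inord_val. Qed.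

Lemma sum_delta m (x : 'rV[R]_m.+1) k :
  \sum_(i < m.+1) x 0 i * ((i : nat) == k)%:R = Xv x k.
Proof.
rewrite /Xv; case: ifP => hk.
  rewrite (bigD1 (inord k)) //= inordK // eqxx mulr1 big1 ?addr0 // => i ne.
  rewrite (_ : ((i : nat) == k) = false) ?mulr0 //; apply/negbTE.
  apply: contra ne => /eqP e; apply/eqP/val_inj; by rewrite /= inordK.
rewrite big1 // => i _; rewrite (_ : ((i : nat) == k) = false) ?mulr0 //.
apply/negbTE/eqP => e; have := ltn_ord i; rewrite e; lia.
Qed.

Lemma col_eq m (x : 'rV[R]_m.+1) (j : 'I_m.+1) : (2 <= m)%N -> (1 <= j)%N ->
  (x *m transP R m.+1) 0 j = (Xv x j.-1 + Xv x j.+1 + (j == m :> nat)%:R * Xv x j) / 6.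
Proof.
move=> hm hj; rewrite mxE.
have E : forall (y a b c d : R), y * ((a + b + c * d) / 6) = (y * a + y * b + d * (y * c)) / 6.
  by move=> *; ring.
under eq_bigr => i _ do rewrite mxE.
rewrite (eq_bigr (fun i : 'I_m.+1 => (x 0 i * ((i:nat) == j.-1)%:R + x 0 i * ((i:nat) == j.+1)%:R + (j == m :> nat)%:R * (x 0 i * ((i:nat) == j)%:R)) / 6)); last first.
  move=> i _; rewrite Pentry_col //; [by rewrite -ltnS ltn_ord | by rewrite hj /= -ltnS ltn_ord].
by rewrite -mulr_suml !big_split /= -mulr_sumr !sum_delta.
Qed.

Lemma col0_eq m (x : 'rV[R]_m.+1) : (2 <= m)%N ->
  (x *m transP R m.+1) 0 ord0 = 2/3 * \sum_(i < m.+1) x 0 i + (Xv x 0 + Xv x 1) / 6.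
Proof.
move=> hm; rewrite mxE.
have E : forall (y a b : R), y * (2/3 + (a + b) / 6) = 2/3 * y + (y * a + y * b) / 6.
  by move=> *; ring.
under eq_bigr => i _ do rewrite mxE.
rewrite (eq_bigr (fun i : 'I_m.+1 => 2/3 * x 0 i + (x 0 i * ((i:nat) == 0%N)%:R + x 0 i * ((i:nat) == 1%N)%:R) / 6)); last first.
  move=> i _; rewrite Pentry_col0 //; by rewrite -ltnS ltn_ord.
by rewrite big_split /= -mulr_sumr -mulr_suml big_split /= !sum_delta.
Qed.


Lemma cR1 : cR 1 = 1.
Proof. by rewrite /cR /bR /= subr0. Qed.
Lemma cR2 : cR 2 = 5.
Proof. by rewrite /cR /bR /= -intrB. Qed.

Lemma stat_col m (x : 'rV[R]_m.+1) (hm : (2 <= m)%N) (hx : x *m transP R m.+1 = x) j :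
  (1 <= j <= m)%N -> Xv x j = (Xv x j.-1 + Xv x j.+1 + (j == m)%:R * Xv x j) / 6.
Proof.
move=> /andP[h1 h2]; have hj : (j < m.+1)%N by rewrite ltnS.
have := congr1 (fun M : 'rV_m.+1 => M 0 (inord j)) hx.
rewrite /= col_eq ?inordK // Xv_ord inordK // => e; exact: esym e.
Qed.

Lemma Xv_out m (x : 'rV[R]_m.+1) : Xv x m.+1 = 0.
Proof. by rewrite /Xv ltnn. Qed.

Lemma shape m (x : 'rV[R]_m.+1) (hm : (2 <= m)%N) (hx : x *m transP R m.+1 = x) k :
  (k <= m)%N -> Xv x (m - k) = cR k.+1 * Xv x m.
Proof.
pose Q (k : nat) : Prop := (k <= m)%N -> Xv x (m - k) = cR k.+1 * Xv x m.
suff H : forall k, Q k /\ Q k.+1 by case: (H k).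
rewrite /Q; clear k.
elim=> [|k [IH1 IH2]].
  split; first by rewrite subn0 cR1 mul1r.
  move=> h1; have := stat_col hm hx (j := m); rewrite leqnn eqxx Xv_out subn1 cR2 andbT.
  move=> e; have := e h1; rewrite /= mul1r addr0; lra.
split; first exact: IH2.
move=> h; have := stat_col hm hx (j := m - k.+1).
have e1 : (m - k.+1).-1 = (m - k.+2)%N by lia.
have e2 : (m - k.+1).+1 = (m - k)%N by lia.
have e3 : ((m - k.+1)%N == m) = false by apply/eqP; lia.
have e4 : (1 <= (m - k.+1)%N <= m)%N by lia.
rewrite e1 e2 e3 => /(_ e4) e.
have -> : Xv x (m - k.+2) = 6 * Xv x (m - k.+1) - Xv x (m - k) by move: e; rewrite /=; lra.
rewrite IH1 ?IH2 1?ltnW //; last exact: ltnW.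
rewrite (cR_rec (k := k.+1)) //; ring.
Qed.


Lemma bR_rec' m : (1 <= m)%N -> bR m.+1 = 6 * bR m - bR (m - 1).
Proof. by case: m => // m _; rewrite bR_rec subn1. Qed.
End S.

Arguments cR {R}. Arguments bR {R}.

Theorem theorem2p3 (R : realFieldType) (n : nat) (hn : (3 <= n)%N) :
  let pi : 'rV[R]_n :=
    \row_(i < n) ((balancing (n - i) - balancing (n - i - 1))%:~R
                  / (balancing n)%:~R) in
  [/\ is_prob_vec pi,
      pi *m transP R n = pi
    & forall x : 'rV[R]_n, is_prob_vec x -> x *m transP R n = x -> x = pi].
Proof.
case: n hn => [//|m] hn; have hm : (2 <= m)%N by [].
move=> pi.
have Bpos : 0 < bR m.+1 :> R by exact: bR_gt0.
have Bne0 : bR m.+1 != 0 :> R by exact: lt0r_neq0.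
have piE : forall (r : 'I_1) (i : 'I_m.+1), pi r i = cR (m.+1 - i) / bR m.+1.
  by move=> r i; rewrite /pi mxE /cR /bR rmorphB.
have XpiE : forall k, (k <= m)%N -> Xv pi k = cR (m.+1 - k) / bR m.+1.
  by move=> k hk; rewrite /Xv hk piE inordK.
have sum1 : \sum_(i < m.+1) pi 0 i = 1.
  by rewrite (eq_bigr _ (fun i _ => piE 0 i)) -mulr_suml tele divff.
split.
- split => [i|//]; rewrite piE divr_ge0 ?cR_ge0 //; exact: ltW.
- apply/rowP => j.
  have [j0|jpos] := posnP j.
    have -> : j = ord0 by apply: val_inj.
    transitivity (cR (m.+1 - 0) / bR m.+1 : R); last by symmetry; exact: (piE 0 ord0).
    rewrite col0_eq // sum1 !XpiE // ?(ltnW hm) /= ?subn0 ?subn1.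
    have r : bR m.+1 = 6 * bR m - bR (m - 1) :> R by apply: bR_rec'; lia.
    have key : 4 * bR m.+1 = 5 * cR m.+1 - cR m :> R.
      by rewrite /cR subn1 /= r; ring.
    apply: (mulIf Bne0).
    have h1 : (2 / 3 * 1 + (cR m.+1 / bR m.+1 + cR m / bR m.+1) / 6) * bR m.+1
       = (4 * bR m.+1 + cR m.+1 + cR m) / 6 :> R by field.
    have h2 : cR m.+1 / bR m.+1 * bR m.+1 = cR m.+1 :> R by field.
    rewrite h1 h2 key; field. all: try done.
  transitivity (cR (m.+1 - j) / bR m.+1 : R); last by symmetry; exact: (piE 0 j).
  rewrite col_eq //.
  have hj : (j <= m)%N by rewrite -ltnS.
  rewrite XpiE; last lia.
  have [jm|jm] := eqVneq (j : nat) m.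
    rewrite jm Xv_out XpiE //.
    have -> : (m.+1 - m.-1 = 2)%N by lia.
    have -> : (m.+1 - m = 1)%N by lia.
    rewrite cR1 cR2 /=; field. all: try done.
  have hjm : (j < m)%N by rewrite ltn_neqAle jm hj.
  rewrite XpiE //.
  have k1 : (1 <= m - j)%N by rewrite subn_gt0.
  have [k hk] : exists k, (m - j)%N = k by eexists.
  rewrite hk in k1.
  have -> : (m.+1 - j.-1 = k.+2)%N by lia.
  have -> : (m.+1 - j.+1 = k)%N by lia.
  have -> : (m.+1 - j = k.+1)%N by lia.
  rewrite cR_rec // /= mul0r addr0. field. all: try done.
move=> x [x0 x1] hx.
have sh := shape hm hx.
have xE : forall i : 'I_m.+1, x 0 i = cR (m.+1 - i) * Xv x m.
  move=> i; rewrite Xv_ord; have hi : (i <= m)%N by rewrite -ltnS.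
  have := sh (m - i)%N (leq_subr _ _); rewrite subKn // => ->.
  by rewrite subSn.
have x1' : bR m.+1 * Xv x m = 1.
  by rewrite -x1 (eq_bigr _ (fun i _ => xE i)) -mulr_suml tele.
have XE : Xv x m = (bR m.+1)^-1.
  by rewrite -[Xv x m](mulKf Bne0) x1' mulr1.
apply/rowP => i.
transitivity (cR (m.+1 - i) / bR m.+1 : R); last by symmetry; exact: (piE 0 i).
by rewrite xE XE.
Qed.
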